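(* Let $G$ be a strongly Deza graph with parameters $(n,k,b,a)$. Then: (i) $G$ has at most five distinct eigenvalues. (ii) If $G$ has exactly two distinct eigenvalues, then $a=0$, $b=k-1\geqslant 1$, and $G$ is a disjoint union of (at least two) cliques of order $k+1$. (iii) If $G$ has exactly three distinct eigenvalues, then one of the following holds: $G$ is a strongly regular graph with parameters $(n,k,\lambda,\mu)$ where $\{\lambda,\mu\}=\{a,b\}$; or $G$ is disconnected and each connected component is a strongly regular graph with parameters $(v,k,b,b)$ for some $v$; or each connected component of $G$ is a complete bipartite graph $K_{k,k}$ with $k\geqslant 2$.
   Context: All graphs are finite, simple and undirected; eigenvalues of a graph are those of its adjacency matrix. A Deza graph with parameters $(n,k,b,a)$, where $b\geqslant a$, is a $k$-regular graph on $n$ vertices, which is neither complete nor edgeless, such that any two distinct vertices have exactly $b$ or exactly $a$ common neighbours. If $b>a$, the children $G_A$ and $G_B$ of $G$ are the graphs on the vertex set of $G$ in which two distinct vertices are adjacent if and only if they have exactly $a$ (for $G_A$), respectively exactly $b$ (for $G_B$), common neighbours in $G$; if $b=a$, $G_A$ is the complete graph and $G_B$ is the edgeless graph. A strongly regular graph with parameters $(n,k,\lambda,\mu)$ is a $k$-regular graph on $n$ vertices, neither complete nor edgeless, in which any two adjacent vertices have exactly $\lambda$ common neighbours and any two distinct non-adjacent vertices have exactly $\mu$ common neighbours (disconnected examples, i.e. disjoint unions of at least two cliques of equal size, are allowed). A strongly Deza graph is a Deza graph both of whose children are strongly regular graphs. *)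

(* Defs.v *)
From mathcomp Require Import all_boot all_order all_algebra algC.
Set Implicit Arguments.
Unset Strict Implicit.
Unset Printing Implicit Defensive.
Import GRing.Theory Num.Theory.

Section Graphs.
Variable n : nat.
Implicit Types (adj : rel 'I_n) (C : {set 'I_n}).

Definition simple_graph adj : Prop :=
  (forall x y, adj x y = adj y x) /\ (forall x, ~~ adj x x).

Definition common_nbrs adj (x y : 'I_n) : nat :=
  #|[set z | adj x z && adj y z]|.

Definition regular adj (k : nat) : Prop :=
  forall x, #|[set y | adj x y]| = k.

Definition complete adj : Prop := forall x y, x != y -> adj x y.
Definition edgeless adj : Prop := forall x y, ~~ adj x y.

Definition deza adj (k b a : nat) : Prop :=
  [/\ simple_graph adj, regular adj k, ~ complete adj, ~ edgeless adj &
      a <= b /\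
      forall x y, x != y -> common_nbrs adj x y = b \/ common_nbrs adj x y = a].

Definition childA adj (b a : nat) : rel 'I_n :=
  fun x y => if a < b then (x != y) && (common_nbrs adj x y == a) else x != y.
Definition childB adj (b a : nat) : rel 'I_n :=
  fun x y => if a < b then (x != y) && (common_nbrs adj x y == b) else false.

Definition srg adj (k lam mu : nat) : Prop :=
  [/\ simple_graph adj, regular adj k, ~ complete adj, ~ edgeless adj &
      (forall x y, x != y -> adj x y -> common_nbrs adj x y = lam) /\
      forall x y, x != y -> ~~ adj x y -> common_nbrs adj x y = mu].

Definition is_srg adj : Prop := exists k lam mu, srg adj k lam mu.

Definition strongly_deza adj (k b a : nat) : Prop :=
  [/\ deza adj k b a, is_srg (childA adj b a) & is_srg (childB adj b a)].

Definition adjmx adj : 'M[algC]_n := \matrix_(i, j) ((adj i j)%:R)%R.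

Definition num_eigenvalues (A : 'M[algC]_n) (m : nat) : Prop :=
  exists s : seq algC, [/\ uniq s, size s = m & forall x, eigenvalue A x <-> x \in s].

Definition component adj (x : 'I_n) : {set 'I_n} := [set y | connect adj x y].
Definition connected_graph adj : Prop := forall x y, connect adj x y.

(* G is a disjoint union of at least two cliques, each of order m *)
Definition union_of_cliques adj (m : nat) : Prop :=
  [/\ forall x y, x != y -> adj x y = connect adj x y,
      forall x, #|component adj x| = m &
      exists x y, ~~ connect adj x y].

Definition srg_on adj C (v k lam mu : nat) : Prop :=
  [/\ #|C| = v,
      forall x, x \in C -> #|[set y in C | adj x y]| = k,
      ~ (forall x y, x \in C -> y \in C -> x != y -> adj x y),
      ~ (forall x y, x \in C -> y \in C -> ~~ adj x y) &
      (forall x y, x \in C -> y \in C -> x != y -> adj x y ->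
        #|[set z in C | adj x z && adj y z]| = lam) /\
      forall x y, x \in C -> y \in C -> x != y -> ~~ adj x y ->
        #|[set z in C | adj x z && adj y z]| = mu].

Definition complete_bipartite_on adj C (k : nat) : Prop :=
  exists X Y : {set 'I_n},
    [/\ X :&: Y = set0, X :|: Y = C, #|X| = k, #|Y| = k &
        forall x y, x \in C -> y \in C ->
          adj x y = ((x \in X) && (y \in Y)) || ((x \in Y) && (y \in X))].

End Graphs.

(* Main.v *)
Require Import Defs.
From mathcomp Require Import all_boot all_order all_algebra algC.
From mathcomp Require Import ring.
Set Implicit Arguments.
Unset Strict Implicit.
Unset Printing Implicit Defensive.
Import GRing.Theory Num.Theory Num.Def.
Local Open Scope ring_scope.
Section Spectral.
Variable n' : nat.
Local Notation n := n'.+1.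
Implicit Types (M W V : 'M[algC]_n).

Lemma sum_conj_eq0 (m : nat) (v : 'I_m -> algC) :
  \sum_j v j * (v j)^* = 0 -> forall j, v j = 0.
Proof.
move=> H j; apply/eqP; rewrite -mul_conjC_eq0; apply/eqP.
by apply: (psumr_eq0P _ H) => // i _; rewrite mul_conjC_ge0.
Qed.

Lemma mx_conj_eq0 m p (V : 'M[algC]_(m, p)) : V *m (map_mx conjC V)^T = 0 -> V = 0.
Proof.
move=> H; apply/matrixP => i j; rewrite mxE.
have := congr1 (fun M : 'M_m => M i i) H; rewrite !mxE => Hs.
apply: (sum_conj_eq0 (v := V i)) => //.
rewrite -[RHS]Hs; apply: eq_bigr => l _; by rewrite !mxE.
Qed.

Lemma sym_sq_kill M W : M^T = M -> map_mx conjC M = M ->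
  W *m M *m M = 0 -> W *m M = 0.
Proof.
move=> sM rM H; apply: mx_conj_eq0.
by rewrite map_mxM rM trmx_mul sM mulmxA H mul0mx.
Qed.

Lemma eig_real (A : 'M[algC]_n) z : A^T = A -> map_mx conjC A = A ->
  eigenvalue A z -> z^* = z.
Proof.
move=> sA rA /eigenvalueP [v Av nz].
have E1 : v *m A *m (map_mx conjC v)^T = z *: (v *m (map_mx conjC v)^T).
  by rewrite Av scalemxAl.
have E2 : v *m A *m (map_mx conjC v)^T = z^* *: (v *m (map_mx conjC v)^T).
  rewrite -mulmxA -{1}sA -trmx_mul -rA -map_mxM Av map_mxZ /= linearZ /=.
  by rewrite -scalemxAr.
have : (z - z^*) *: (v *m (map_mx conjC v)^T) = 0.
  by rewrite scalerBl -E1 -E2 subrr.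
move/eqP; rewrite scaler_eq0 subr_eq0 => /orP [/eqP H|/eqP H]; first by rewrite -H.
by case/eqP: nz; apply: mx_conj_eq0.
Qed.

Lemma red_sq (A : 'M[algC]_n) z Q : A^T = A -> map_mx conjC A = A -> z^* = z ->
  horner_mx A (('X - z%:P) ^+ 2 * Q) = 0 -> horner_mx A (('X - z%:P) * Q) = 0.
Proof.
move=> sA rA hz.
have HM : horner_mx A ('X - z%:P) = A - z%:M.
  by rewrite rmorphB /= horner_mx_X horner_mx_C.
have sM : (A - z%:M)^T = A - z%:M by rewrite linearB /= tr_scalar_mx sA.
have rM : map_mx conjC (A - z%:M) = A - z%:M.
  by rewrite map_mxB map_scalar_mx rA /= hz.
rewrite expr2 [_ * Q]mulrC [_ * Q]mulrC !rmorphM /= HM mulrA -!mulmxE.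
exact: sym_sq_kill.
Qed.

Lemma prod_eig_zero (A : 'M[algC]_n) (s : seq algC) :
  A^T = A -> map_mx conjC A = A -> uniq s ->
  (forall x, eigenvalue A x <-> x \in s) ->
  horner_mx A (\prod_(z <- s) ('X - z%:P)) = 0.
Proof.
move=> sA rA us Hs.
have [rs Hrs] := closed_field_poly_normal (char_poly A).
rewrite (monicP (char_poly_monic A)) scale1r in Hrs.
have real_rs : forall z, z \in rs -> z^* = z.
  move=> z zr; apply: (eig_real sA rA).
  by rewrite eigenvalue_root_char Hrs root_prod_XsubC.
have key : forall r, (forall z, z \in r -> z^* = z) -> forall Q,
    horner_mx A (\prod_(z <- r) ('X - z%:P) * Q) = 0 ->
    horner_mx A (\prod_(z <- undup r) ('X - z%:P) * Q) = 0.
  elim=> [//|z r IH] Hr Q H.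
  have H' : horner_mx A (\prod_(z <- undup r) ('X - z%:P) * (('X - z%:P) * Q)) = 0.
    apply: IH => [y yr|]; first by apply: Hr; rewrite inE yr orbT.
    by rewrite -H big_cons -mulrA mulrCA.
  rewrite /=; case: ifP => zr.
    have zu : z \in undup r by rewrite mem_undup.
    rewrite (perm_big _ (perm_to_rem zu)) big_cons /= in H' *.
    rewrite -mulrA; apply: red_sq => //; first by apply: Hr; rewrite inE eqxx.
    by rewrite -H' expr2 -!mulrA; congr (horner_mx A (_ * _)); rewrite mulrCA.
  by rewrite big_cons -mulrA mulrCA.
have := key rs real_rs 1; rewrite !mulr1 -Hrs Cayley_Hamilton => /(_ erefl).
suff P : perm_eq (undup rs) s by rewrite (perm_big _ P).
apply: uniq_perm; rewrite ?undup_uniq // => x.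
rewrite mem_undup; apply/idP/idP => H.
  by apply/Hs; rewrite eigenvalue_root_char Hrs root_prod_XsubC.
by move/Hs: H; rewrite eigenvalue_root_char Hrs root_prod_XsubC.
Qed.

Lemma eig_root (A : 'M[algC]_n) q x : horner_mx A q = 0 -> eigenvalue A x -> root q x.
Proof.
move=> Hq; rewrite eigenvalue_root_min => Hx.
have /dvdpP [r ->] := mxminpoly_min Hq.
by rewrite rootM Hx orbT.
Qed.
End Spectral.

Lemma card_sumb (m : nat) (P : pred 'I_m) :
  (\sum_z (P z : nat))%N = #|[set z | P z]|.
Proof. by rewrite -sum1dep_card [RHS]big_mkcond /=; apply: eq_bigr => z _; case: (P z). Qed.

Section GraphBasics.
Variables (n' : nat) (r : rel 'I_n'.+1).
Local Notation n := n'.+1.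
Hypothesis rsym : forall x y, r x y = r y x.

Lemma adjmxE x y : adjmx r x y = (r x y)%:R.
Proof. by rewrite mxE. Qed.

Lemma adjmx_tr : (adjmx r)^T = adjmx r.
Proof. by apply/matrixP => x y; rewrite !mxE rsym. Qed.

Lemma adjmx_real : map_mx conjC (adjmx r) = adjmx r.
Proof. by apply/matrixP => x y; rewrite !mxE conjC_nat. Qed.

Lemma common_sym x y : common_nbrs r x y = common_nbrs r y x.
Proof. by rewrite /common_nbrs; apply: eq_card => z; rewrite !inE andbC. Qed.

Lemma adjmx_sq x y : (adjmx r *m adjmx r) x y = (common_nbrs r x y)%:R.
Proof.
rewrite mxE /common_nbrs -card_sumb natr_sum; apply: eq_bigr => z _.
by rewrite !mxE -natrM mulnb (rsym z y).
Qed.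

Lemma regular_diag kk : regular r kk -> forall x, common_nbrs r x x = kk.
Proof.
move=> H x; rewrite /common_nbrs -(H x); apply: eq_card => z.
by rewrite !inE andbb.
Qed.

Lemma row_sum kk : regular r kk -> forall x, \sum_y adjmx r x y = kk%:R.
Proof.
move=> H x; rewrite -(H x) -card_sumb natr_sum; apply: eq_bigr => y _.
by rewrite mxE.
Qed.

Lemma srg_sq kk lam mu : srg r kk lam mu ->
  adjmx r *m adjmx r = kk%:R%:M + lam%:R *: adjmx r
    + mu%:R *: (const_mx 1 - 1%:M - adjmx r).
Proof.
case=> [[_ Hirr] Hr _ _ [Hl Hm]]; apply/matrixP => x y.
rewrite adjmx_sq !mxE; case: (eqVneq x y) => [<-|nxy].
  by rewrite (regular_diag Hr) (negbTE (Hirr x)) /= mulr0 addr0 subrr subr0 mulr0 addr0.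
rewrite /= mulr0n add0r subr0; case: (boolP (r x y)) => rxy.
  by rewrite (Hl _ _ nxy rxy) mulr1 subrr mulr0 addr0.
by rewrite (Hm _ _ nxy rxy) mulr0 subr0 mulr1 add0r.
Qed.
End GraphBasics.

Section Main.
Variables (n' : nat) (adj : rel 'I_n'.+1) (k b a : nat).
Local Notation n := n'.+1.
Hypothesis Hsd : strongly_deza adj k b a.
Local Notation A := (adjmx adj).
Local Notation c := (common_nbrs adj).
Local Notation Bm := (adjmx (childB adj b a)).
Local Notation J := (const_mx 1 : 'M[algC]_n).

Lemma Hdeza : deza adj k b a. Proof. by case: Hsd. Qed.
Lemma Hsym x y : adj x y = adj y x. Proof. by case: Hdeza => [[]]. Qed.
Lemma Hirr x : ~~ adj x x. Proof. by case: Hdeza => [[]]. Qed.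
Lemma Hreg : regular adj k. Proof. by case: Hdeza. Qed.
Lemma Hnc : ~ complete adj. Proof. by case: Hdeza. Qed.
Lemma Hne : ~ edgeless adj. Proof. by case: Hdeza. Qed.
Lemma Hab x y : x != y -> c x y = b \/ c x y = a.
Proof. by case: Hdeza => _ _ _ _ [_]; apply. Qed.

Lemma altb : (a < b)%N.
Proof.
case: Hsd => _ [kA [lA [mA [_ _ H _ _]]]] _.
case: ltnP => // ba; case: H => x y nxy.
by rewrite /childA ltnNge ba /=.
Qed.

Lemma childBE x y : childB adj b a x y = (x != y) && (c x y == b).
Proof. by rewrite /childB altb. Qed.

Lemma childA_E x y : childA adj b a x y = (x != y) && (c x y == a).
Proof. by rewrite /childA altb. Qed.

Lemma childB_sym x y : childB adj b a x y = childB adj b a y x.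
Proof. by rewrite !childBE eq_sym common_sym //; apply: Hsym. Qed.

Lemma kpos : (0 < k)%N.
Proof.
case: (posnP k) => // k0; case: Hne => x y; apply/negP => H.
have := Hreg x; rewrite k0 => /eqP; rewrite cards_eq0 => /eqP /setP /(_ y).
by rewrite !inE H.
Qed.

Lemma cdiag x : c x x = k.
Proof. exact: (regular_diag Hreg x). Qed.

Lemma A_sq : A *m A = k%:R%:M + b%:R *: Bm + a%:R *: (J - 1%:M - Bm).
Proof.
apply/matrixP => x y; rewrite adjmx_sq; last exact: Hsym.
rewrite !mxE; case: (eqVneq x y) => [<-|nxy].
  rewrite cdiag childBE eqxx /= mulr0 addr0 subrr subr0 mulr0 addr0.
  by rewrite mulr1n.
rewrite /= mulr0n add0r subr0 childBE nxy /=.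
case: (Hab nxy) => ->; first by rewrite eqxx mulr1 subrr mulr0 addr0.
by rewrite (ltn_eqF altb) mulr0 subr0 mulr1 add0r.
Qed.

Lemma ones_col : A *m (const_mx 1 : 'cV_n) = k%:R *: (const_mx 1 : 'cV_n).
Proof.
apply/matrixP => x j; rewrite !mxE mulr1 -(row_sum Hreg x).
by apply: eq_bigr => y _; rewrite !mxE mulr1.
Qed.

Lemma J_fact : J = (const_mx 1 : 'cV_n) *m (const_mx 1 : 'rV_n).
Proof. by apply/matrixP => x y; rewrite !mxE big_ord1 !mxE mulr1. Qed.

Lemma eig_cases kB lB mB (th : algC) : srg (childB adj b a) kB lB mB ->
  eigenvalue A th -> th = k%:R \/ exists be : algC,
    be ^+ 2 = (kB%:R - mB%:R) + (lB%:R - mB%:R) * be /\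
    th ^+ 2 = (k%:R - a%:R) + (b%:R - a%:R) * be.
Proof.
move=> HB /eigenvalueP [v Av nz].
pose u := (const_mx 1 : 'cV[algC]_n).
have H1 : (th - k%:R) *: (v *m u) = 0.
  by rewrite scalerBl scalemxAl -Av -mulmxA ones_col -scalemxAr subrr.
case: (eqVneq th k%:R) => [-> | nk]; [by left | right].
have vu0 : v *m u = 0.
  by move/eqP: H1; rewrite scaler_eq0 subr_eq0 (negbTE nk) => /eqP.
have vJ : v *m J = 0 by rewrite J_fact mulmxA vu0 mul0mx.
have hba : (b%:R - a%:R : algC) != 0.
  by rewrite subr_eq0 eqr_nat neq_ltn altb orbT.
have vA2 : v *m (A *m A) = th ^+ 2 *: v.
  by rewrite mulmxA Av -scalemxAl Av scalerA expr2.
rewrite A_sq !mulmxDr -!scalemxAr !mulmxBr vJ mul_mx_scalar mulmx1 in vA2.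
set be := (th ^+ 2 - (k%:R - a%:R)) / (b%:R - a%:R).
have vB : v *m Bm = be *: v.
  apply/rowP => j; have := congr1 (fun M : 'rV_n => M 0 j) vA2; rewrite !mxE => E.
  rewrite /be; apply: (mulfI hba); rewrite mulrA mulrCA mulfV // mulr1.
  apply/eqP; rewrite -subr_eq0; apply/eqP.
  rewrite -[RHS](subrr (th ^+ 2 * v 0 j)); rewrite -{1}E; ring.
have vB2 : v *m (Bm *m Bm) = be ^+ 2 *: v.
  by rewrite mulmxA vB -scalemxAl vB scalerA expr2.
rewrite (srg_sq childB_sym HB) !mulmxDr -!scalemxAr !mulmxBr vJ mul_mx_scalar mulmx1 vB in vB2.
exists be; split; last first.
  rewrite /be mulrC mulfVK //; ring.
have [j vj] : exists j, v 0 j != 0.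
  apply/existsP; apply: contraR nz; rewrite negb_exists => /forallP H.
  by apply/eqP/rowP => j; rewrite mxE; apply/eqP; move: (H j); rewrite negbK.
have := congr1 (fun M : 'rV_n => M 0 j) vB2; rewrite !mxE => E.
apply: (mulIf vj); apply/eqP; rewrite -subr_eq0; apply/eqP.
rewrite -[RHS](subrr (be ^+ 2 * v 0 j)); rewrite -{1}E; ring.
Qed.


Lemma sq_cases (x g : algC) : x ^+ 2 = g -> x = sqrtC g \/ x = - sqrtC g.
Proof.
move=> H; have : (x - sqrtC g) * (x + sqrtC g) = 0.
  by rewrite -subr_sqr sqrtCK H subrr.
move/eqP; rewrite mulf_eq0 subr_eq0 addr_eq0 => /orP [] /eqP; tauto.
Qed.

Lemma quad_cases (be c0 c1 : algC) : be ^+ 2 = c0 + c1 * be ->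
  let d := sqrtC (c1 ^+ 2 + 4 * c0) in
  be = (c1 + d) / 2 \/ be = c1 - (c1 + d) / 2.
Proof.
move=> H d.
have hd : d ^+ 2 = c1 ^+ 2 + 4 * c0 by rewrite sqrtCK.
have h2 : (2 : algC) != 0 by rewrite pnatr_eq0.
have : (be - (c1 + d) / 2) * (be - (c1 - (c1 + d) / 2)) = 0.
  have -> : (be - (c1 + d) / 2) * (be - (c1 - (c1 + d) / 2)) =
    (be ^+ 2 - c0 - c1 * be) - (d ^+ 2 - (c1 ^+ 2 + 4 * c0)) / 4.
    by field.
  by rewrite H hd subrr mul0r subr0; ring.
by move/eqP; rewrite mulf_eq0 !subr_eq0 => /orP [] /eqP; tauto.
Qed.

Lemma part_i : exists m, (m <= 5)%N /\ num_eigenvalues A m.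
Proof.
case: Hsd => _ _ [kB [lB [mB HB]]].
pose c0 : algC := kB%:R - mB%:R.
pose c1 : algC := lB%:R - mB%:R.
pose d := sqrtC (c1 ^+ 2 + 4 * c0).
pose be1 := (c1 + d) / 2.
pose be2 := c1 - (c1 + d) / 2.
pose r1 := sqrtC ((k%:R - a%:R) + (b%:R - a%:R) * be1).
pose r2 := sqrtC ((k%:R - a%:R) + (b%:R - a%:R) * be2).
pose L := [:: k%:R; r1; - r1; r2; - r2].
pose s := undup (filter (eigenvalue A) L).
exists (size s); split.
  by apply: leq_trans (size_undup _) _; rewrite size_filter (count_size _ L).
exists s; split => // [|x]; first by rewrite undup_uniq.
rewrite mem_undup mem_filter; split => [Hx|/andP [] //].
rewrite Hx /=; case: (eig_cases HB Hx) => [->|[be [Hbe Hx2]]].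
  by rewrite inE eqxx.
case: (quad_cases Hbe) => Hb; rewrite -/d -/be1 -/be2 in Hb;
  rewrite Hb in Hx2; case: (sq_cases Hx2) => ->; rewrite !inE eqxx ?orbT //.
Qed.

Lemma k_eig : eigenvalue A k%:R.
Proof.
apply/eigenvalueP; exists (const_mx 1).
  apply/rowP => y; rewrite !mxE mulr1 -(row_sum Hreg y).
  by apply: eq_bigr => x _; rewrite !mxE mul1r Hsym.
apply/eqP => /rowP /(_ ord0); rewrite !mxE => /eqP; by rewrite oner_eq0.
Qed.

Lemma ann_of (s : seq algC) : uniq s -> (forall x, eigenvalue A x <-> x \in s) ->
  horner_mx A (('X - (k%:R)%:P) * \prod_(z <- rem k%:R s) ('X - z%:P)) = 0.
Proof.
move=> us Hs; have ks : k%:R \in s by apply/Hs/k_eig.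
have <- : \prod_(z <- k%:R :: rem k%:R s) ('X - z%:P) =
   ('X - (k%:R)%:P) * \prod_(z <- rem k%:R s) ('X - z%:P) by rewrite big_cons.
rewrite -(perm_big _ (perm_to_rem ks)).
apply: prod_eig_zero => //; [exact: adjmx_tr Hsym | exact: adjmx_real].
Qed.

Lemma hornerXC (r : algC) : horner_mx A ('X - r%:P) = A - r%:M.
Proof. by rewrite rmorphB /= horner_mx_X horner_mx_C. Qed.

Lemma quad_entry (r t : algC) x y :
  ((A - r%:M) *m (A - t%:M)) x y =
  (c x y)%:R - (r + t) * (adj x y)%:R + (r * t) *+ (x == y).
Proof.
rewrite mulmxBl !mulmxBr mul_mx_scalar mul_scalar_mx -scalar_mxM.
rewrite !mxE; have := adjmx_sq Hsym x y; rewrite mxE => ->.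
case: (x == y); rewrite ?mulr0n ?mulr1n; ring.
Qed.

Lemma exists_pair (r : rel 'I_n) : ~ edgeless r -> exists x y, r x y.
Proof.
move=> H; case: (boolP [exists x, exists y, r x y]).
  by move/existsP => [x /existsP [y rxy]]; exists x, y.
rewrite negb_exists => /forallP Hn; case: H => x y.
by move: (Hn x); rewrite negb_exists => /forallP.
Qed.

Lemma exists_nonadj : exists x y, (x != y) && ~~ adj x y.
Proof.
case: (boolP [exists x, exists y, (x != y) && ~~ adj x y]).
  by move/existsP => [x /existsP [y H]]; exists x, y.
rewrite negb_exists => /forallP Hn; case: Hnc => x y nxy.
move: (Hn x); rewrite negb_exists => /forallP /(_ y).
by rewrite nxy /= negbK.
Qed.

Lemma conn_closed (S : pred 'I_n) x y :
  (forall u w, adj u w -> S u -> S w) -> S x -> connect adj x y -> S y.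
Proof.
move=> H Sx cxy.
have cl : closed adj S.
  move=> u w uw; apply/idP/idP; first exact: H.
  by apply: H; rewrite Hsym.
by have := closed_connect cl cxy; rewrite !unfold_in Sx => <-.
Qed.

Lemma part_ii : num_eigenvalues A 2 ->
  [/\ a = 0, b = k - 1, 1 <= b & union_of_cliques adj k.+1]%N.
Proof.
case=> s [us ss Hs].
have := ann_of us Hs.
have : size (rem k%:R s) = 1%N.
  by rewrite size_rem ?ss //; apply/Hs/k_eig.
case: (rem k%:R s) => [|th [|]] // _.
rewrite big_seq1 rmorphM /= !hornerXC -mulmxE => H0.
have E x y := congr1 (fun M : 'M_n => M x y) H0.
have th1 : th = -1.
  have := E ord0 ord0; rewrite quad_entry mxE cdiag (negbTE (Hirr _)) eqxx mulr0 subr0 mulr1n.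
  have kn0 : (k%:R : algC) != 0 by rewrite pnatr_eq0 -lt0n kpos.
  move=> H; apply: (mulfI kn0); apply/eqP; rewrite -subr_eq0; apply/eqP.
  by rewrite -H; ring.
have cE x y : x != y -> c x y = if adj x y then (k - 1)%N else 0%N.
  move=> nxy; have := E x y; rewrite quad_entry mxE (negbTE nxy) mulr0n addr0 th1.
  move=> H; apply/eqP; rewrite -(eqr_nat algC); apply/eqP.
  move: H; case: (adj x y); rewrite ?mulr1 ?mulr0 ?natrB ?kpos //.
    by move/eqP; rewrite subr_eq0 => /eqP ->.
  by rewrite subr0.
have cpos x y z : adj x z -> adj y z -> (0 < c x y)%N.
  move=> xz yz; rewrite /common_nbrs card_gt0; apply/set0Pn; exists z.
  by rewrite inE xz yz.
case: Hsd => _ [kA [lA [mA [_ _ _ HAne _]]]] [kB [lB [mB [_ _ _ HBne _]]]].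
have [x1 [y1]] := exists_pair HBne; rewrite childBE => /andP [n1 /eqP cb].
have [x2 [y2]] := exists_pair HAne; rewrite childA_E => /andP [n2 /eqP ca].
have ab := altb.
have a0 : a = 0%N.
  move: ab; rewrite -ca -cb (cE _ _ n1) (cE _ _ n2).
  by case: (adj x2 y2); case: (adj x1 y1); rewrite ?ltnn ?ltn0.
have bk : b = (k - 1)%N.
  move: ab; rewrite a0 -cb (cE _ _ n1).
  by case: (adj x1 y1).
have conn_adj x y : x != y -> connect adj x y -> adj x y.
  move=> nxy cxy.
  suff : (y == x) || adj x y by rewrite eq_sym (negbTE nxy).
  apply: (conn_closed (S := fun y => (y == x) || adj x y)) cxy; last by rewrite eqxx.
  move=> u w uw /orP [/eqP ux|xu]; first by rewrite /= -ux uw orbT.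
  case: (eqVneq w x) => [//|nwx].
  rewrite /=; case: (boolP (adj x w)) => // nxw.
  have := cE x w; rewrite eq_sym nwx (negbTE nxw) => /(_ isT) c0.
  have := cpos x w u xu; rewrite Hsym uw c0 => /(_ isT); by [].
have cadj x y : x != y -> adj x y = connect adj x y.
  move=> nxy; apply/idP/idP; [exact: connect1 | exact: conn_adj].
split => //; first by move: ab; rewrite a0.
split => //.
- move=> x; have -> : component adj x = x |: [set y | adj x y].
    apply/setP => y; rewrite !inE; case: (eqVneq y x) => [->|nyx] /=.
      exact: connect0.
    by rewrite cadj // eq_sym.
  by rewrite cardsU1 inE (negbTE (Hirr x)) Hreg.
- have [x [y /andP [nxy nadj]]] := exists_nonadj.
  by exists x, y; rewrite -cadj.
Qed.

Lemma lap (v : 'cV[algC]_n) : A *m v = k%:R *: v ->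
  forall x y, adj x y -> v x 0 = v y 0.
Proof.
move=> Av.
pose w x := v x 0.
have Aw x : \sum_y (adj x y)%:R * w y = k%:R * w x.
  have := congr1 (fun M : 'cV_n => M x 0) Av; rewrite !mxE => <-.
  by apply: eq_bigr => y _; rewrite mxE.
have S1 x : \sum_y (adj x y)%:R * ((w x - w y) * (w x)^*) = 0.
  under eq_bigr => y _ do rewrite mulrA.
  rewrite -big_distrl /=; apply/eqP; rewrite mulf_eq0; apply/orP; left.
  under eq_bigr => y _ do rewrite mulrBr.
  have rs : \sum_y (adj x y)%:R = k%:R :> algC.
    by rewrite -(row_sum Hreg x); apply: eq_bigr => y _; rewrite mxE.
  by rewrite sumrB Aw -big_distrl /= rs subrr.
pose F x y := (adj x y)%:R * ((w x - w y) * (w x - w y)^*) : algC.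
have Fge0 x y : 0 <= F x y by rewrite mulr_ge0 ?ler0n ?mul_conjC_ge0.
have Fsum : \sum_x \sum_y F x y = 0.
  have -> : \sum_x \sum_y F x y = \sum_x \sum_y (adj x y)%:R * ((w x - w y) * (w x)^*)
      + \sum_x \sum_y (adj x y)%:R * ((w y - w x) * (w y)^*).
    rewrite -big_split /=; apply: eq_bigr => x _.
    rewrite -big_split /=; apply: eq_bigr => y _.
    rewrite /F rmorphB /=; ring.
  rewrite big1 ?add0r; last by move=> x _; apply: S1.
  rewrite exchange_big /=; apply: big1 => y _.
  rewrite -[RHS](S1 y); apply: eq_bigr => x _; by rewrite Hsym.
move=> x y xy.
have Gx : \sum_y F x y = 0.
  apply: (psumr_eq0P _ Fsum) => // x' _; exact: sumr_ge0.
have := psumr_eq0P (fun y _ => Fge0 x y) Gx (i := y) isT.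
rewrite /F xy mul1r => /eqP; rewrite mul_conjC_eq0 subr_eq0 => /eqP.
by [].
Qed.

Lemma col_const (M : 'M[algC]_n) : connected_graph adj -> A *m M = k%:R *: M ->
  forall j x y, M x j = M y j.
Proof.
move=> Hc AM j x y.
have Av : A *m col j M = k%:R *: col j M.
  by rewrite colE mulmxA AM -scalemxAl.
have L := lap Av.
suff : M y j == M x j by move/eqP.
apply: (conn_closed (S := fun y => M y j == M x j)) (Hc x y); last by [].
move=> u w uw /eqP Hu; move: (L u w uw); rewrite !mxE Hu => ->; by [].
Qed.

Lemma conn_case (r t : algC) : connected_graph adj ->
  (A - k%:R%:M) *m ((A - r%:M) *m (A - t%:M)) = 0 ->
  exists lam mu, srg adj k lam mu /\ ((lam = a /\ mu = b) \/ (lam = b /\ mu = a)).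
Proof.
move=> Hc H; set M := (A - r%:M) *m (A - t%:M) in H.
have AM : A *m M = k%:R *: M.
  by move/eqP: H; rewrite mulmxBl mul_scalar_mx subr_eq0 => /eqP.
have colc j x y : M x j = M y j by apply: col_const.
have Msym x y : M x y = M y x.
  by rewrite /M !quad_entry (@common_sym _ adj x y) (Hsym x y) (eq_sym x y).
have Mc x y : M x y = M ord0 ord0.
  by rewrite (colc y x ord0) Msym (colc ord0 y ord0).
have cE x y : x != y -> (c x y)%:R = M ord0 ord0 + (r + t) * (adj x y)%:R.
  move=> nxy; rewrite -(Mc x y) /M quad_entry (negbTE nxy) mulr0n addr0; ring.
have [x1 [y1 e1]] := exists_pair Hne.
have n1 : x1 != y1 by apply: contraTneq e1 => ->; rewrite (negbTE (Hirr _)).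
have [x2 [y2 /andP [n2 ne2]]] := exists_nonadj.
exists (c x1 y1), (c x2 y2).
have Hl x y : x != y -> adj x y -> c x y = c x1 y1.
  move=> nxy xy; apply/eqP; rewrite -(eqr_nat algC) (cE _ _ nxy) (cE _ _ n1) xy e1 //.
have Hm x y : x != y -> ~~ adj x y -> c x y = c x2 y2.
  move=> nxy xy; apply/eqP.
  by rewrite -(eqr_nat algC) (cE _ _ nxy) (cE _ _ n2) (negbTE xy) (negbTE ne2).
split; first by split; [split; [exact: Hsym | exact: Hirr] | exact: Hreg | exact: Hnc | exact: Hne | ].
case: Hsd => _ [kA [lA [mA [_ _ _ HAne _]]]] [kB [lB [mB [_ _ _ HBne _]]]].
have [x3 [y3]] := exists_pair HBne; rewrite childBE => /andP [n3 /eqP cb].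
have [x4 [y4]] := exists_pair HAne; rewrite childA_E => /andP [n4 /eqP ca].
have ab := altb.
have cv x y : x != y -> c x y = c x1 y1 \/ c x y = c x2 y2.
  by move=> nxy; case: (boolP (adj x y)) => H'; [left; apply: Hl | right; apply: Hm].
have lmu : c x1 y1 <> c x2 y2.
  move=> E; have : b = a.
    by case: (cv _ _ n3) => E3; case: (cv _ _ n4) => E4; rewrite -cb -ca E3 E4 ?E.
  by move=> ba; move: ab; rewrite ba ltnn.
case: (Hab n1) => E1; case: (Hab n2) => E2.
- by exfalso; apply: lmu; rewrite E1 E2.
- by right.
- by left.
- by exfalso; apply: lmu; rewrite E1 E2.
Qed.

Lemma cpos_conn u w : (0 < c u w)%N -> connect adj u w.
Proof.
rewrite /common_nbrs card_gt0 => /set0Pn [z]; rewrite inE => /andP [uz wz].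
by apply: connect_trans (connect1 uz) (connect1 _); rewrite Hsym.
Qed.

Lemma comp_closed x y z : y \in component adj x -> adj y z -> z \in component adj x.
Proof. by rewrite !inE => xy yz; apply: connect_trans xy (connect1 yz). Qed.

Section Disc.
Variables (r t : algC).
Hypothesis Hnconn : ~ connected_graph adj.
Hypothesis Hann : (A - k%:R%:M) *m ((A - r%:M) *m (A - t%:M)) = 0.

Lemma disc_pair : exists x0 y0, ~~ connect adj x0 y0.
Proof.
case: (boolP [exists x, exists y, ~~ connect adj x y]).
  by move/existsP => [x /existsP [y H]]; exists x, y.
rewrite negb_exists => /forallP Hn; case: Hnconn => x y.
by move: (Hn x); rewrite negb_exists => /forallP /(_ y); rewrite negbK.
Qed.

Lemma a0 : a = 0%N.
Proof.
have [x0 [y0 nc]] := disc_pair.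
have nxy : x0 != y0 by apply: contraNneq nc => ->; exact: connect0.
have c0 : c x0 y0 = 0%N.
  by apply/eqP; rewrite -leqn0 leqNgt; apply: contra nc; exact: cpos_conn.
case: (Hab nxy) => H0; rewrite c0 in H0; last by [].
by move: altb; rewrite -H0 ltn0.
Qed.

Lemma bpos : (0 < b)%N.
Proof. by move: altb; rewrite a0. Qed.

Lemma b0F : (0%N == b) = false.
Proof. by apply/negbTE; rewrite eq_sym -lt0n bpos. Qed.

Lemma cb x y : x != y -> c x y = b \/ c x y = 0%N.
Proof. by rewrite -a0; apply: Hab. Qed.

Lemma mB0 kB lB mB : srg (childB adj b a) kB lB mB -> mB = 0%N.
Proof.
case=> _ _ _ _ [_ Hm].
have [x0 [y0 nc]] := disc_pair.
have nxy : x0 != y0 by apply: contraNneq nc => ->; exact: connect0.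
have c0 : c x0 y0 = 0%N.
  by apply/eqP; rewrite -leqn0 leqNgt; apply: contra nc; exact: cpos_conn.
have nB : ~~ childB adj b a x0 y0.
  by rewrite childBE c0 b0F andbF.
rewrite -(Hm _ _ nxy nB); apply/eqP; rewrite cards_eq0; apply/eqP/setP => z.
rewrite !inE; apply/negbTE; apply: contra nc => /andP [].
rewrite !childBE => /andP [_ /eqP c1] /andP [_ /eqP c2].
have h1 : connect adj x0 z by apply: cpos_conn; rewrite c1 bpos.
have h2 : connect adj y0 z by apply: cpos_conn; rewrite c2 bpos.
apply: connect_trans h1 _; rewrite (sym_connect_sym Hsym) //.
Qed.

Lemma Btrans u z w : u != w -> childB adj b a u z -> childB adj b a z w ->
  childB adj b a u w.
Proof.
move=> nuw uz zw; apply/negPn/negP => nB.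
case: Hsd => _ _ [kB [lB [mB HB]]].
have := mB0 HB; case: HB => _ _ _ _ [_ Hm] m0.
have := Hm _ _ nuw nB; rewrite m0 => /eqP; rewrite cards_eq0 => /eqP /setP /(_ z).
by rewrite !inE uz (childB_sym w z) zw.
Qed.

Definition T x y := (\sum_z adj x z * c z y)%N.

Lemma A3_entry x y : (A *m (A *m A)) x y = (T x y)%:R.
Proof.
rewrite mxE /T natr_sum; apply: eq_bigr => z _.
by rewrite adjmx_sq ?mxE ?natrM //; apply: Hsym.
Qed.

Lemma T_entry x y : (T x y)%:R = (k%:R + r + t) * (c x y)%:R
  - (r * t + k%:R * (r + t)) * (adj x y)%:R + (k%:R * r * t) *+ (x == y) :> algC.
Proof.
have AM : A *m ((A - r%:M) *m (A - t%:M)) = k%:R *: ((A - r%:M) *m (A - t%:M)).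
  by move/eqP: Hann; rewrite mulmxBl mul_scalar_mx subr_eq0 => /eqP.
have ME : (A - r%:M) *m (A - t%:M) = A *m A - (r + t) *: A + (r * t)%:M.
  apply/matrixP => x' y'; rewrite quad_entry !mxE.
  have := adjmx_sq Hsym x' y'; rewrite mxE => ->; ring.
have E3 : A *m (A *m A) = \matrix_(i, j) (T i j)%:R.
  by apply/matrixP => i j; rewrite A3_entry mxE.
have E2 : A *m A = \matrix_(i, j) (c i j)%:R.
  by apply/matrixP => i j; rewrite adjmx_sq ?mxE //; exact: Hsym.
have := congr1 (fun M : 'M_n => M x y) AM.
rewrite ME mulmxDr mulmxBr -scalemxAr mul_mx_scalar E3 E2 !mxE.
move=> E; apply/eqP; rewrite -subr_eq0; apply/eqP.
have -> : (T x y)%:R = (k%:R * ((c x y)%:R - (r + t) * (adj x y)%:R + r * t *+ (x == y))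
   + (r + t) * (c x y)%:R - r * t * (adj x y)%:R :> algC).
  rewrite -E; ring.
case: (x == y); rewrite ?mulr1n ?mulr0n; ring.
Qed.

Lemma F1 x y : x != y -> ~~ adj x y -> c x y = 0%N -> forall z, adj x z -> c z y = 0%N.
Proof.
move=> nxy nadj c0 z xz.
have := T_entry x y; rewrite (negbTE nadj) c0 (negbTE nxy) !mulr0 mulr0n subr0 addr0.
move/eqP; rewrite pnatr_eq0 /T sum_nat_eq0 => /forallP /(_ z).
by rewrite xz mul1n => /eqP.
Qed.

Lemma F2 x y : T x x = T y y.
Proof.
apply/eqP; rewrite -(eqr_nat algC) !T_entry !cdiag !eqxx.
by rewrite (negbTE (Hirr x)) (negbTE (Hirr y)).
Qed.

Lemma C1 x y z : adj x y -> c x y = 0%N -> adj x z -> c x z = 0%N.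
Proof.
move=> xy c0 xz.
have nxz : x != z by apply: contraTneq xz => <-; rewrite (negbTE (Hirr x)).
have nxy : x != y by apply: contraTneq xy => <-; rewrite (negbTE (Hirr x)).
case: (cb nxz) => // cxz.
have nyz : y != z.
  by apply/eqP => yz; move: cxz; rewrite -yz c0 => b0; move: bpos; rewrite -b0.
have cyz : c y z = b.
  case: (cb nyz) => // cyz0; exfalso.
  have : (0 < c y z)%N.
    rewrite /common_nbrs card_gt0; apply/set0Pn; exists x.
    by rewrite inE -!(Hsym x) xy xz.
  by rewrite cyz0.
have : childB adj b a x y.
  apply: (Btrans (z := z)) => //; rewrite childBE ?nxz ?cxz ?eqxx //.
  by rewrite eq_sym nyz common_sym ?cyz ?eqxx //; apply: Hsym.
by rewrite childBE c0 nxy b0F.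
Qed.

Lemma T_cross x : (forall z, adj x z -> c x z = 0%N) -> T x x = 0%N.
Proof.
move=> H; rewrite /T big1 // => z _; case: (boolP (adj x z)) => xz; rewrite ?mul0n //.
by rewrite common_sym ?H ?muln0 //; apply: Hsym.
Qed.

Lemma T_int x : (forall z, adj x z -> c x z = b) -> T x x = (k * b)%N.
Proof.
move=> H; rewrite /T (eq_bigr (fun z => adj x z * b)%N).
  by rewrite -big_distrl /= card_sumb Hreg.
move=> z _; case: (boolP (adj x z)) => xz; rewrite ?mul0n //.
by rewrite common_sym ?H //; apply: Hsym.
Qed.

Lemma all_dich : (forall x z, adj x z -> c x z = 0%N) \/ (forall x z, adj x z -> c x z = b).
Proof.
case: (boolP [exists x, [exists z, adj x z && (c x z == 0%N)]]).
  move=> /existsP [x1 /existsP [z1 /andP [xz1 /eqP c1]]]; left => y z yz.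
  case: (boolP [exists w, adj y w && (c y w == 0%N)]).
    by move=> /existsP [w /andP [yw /eqP cw]]; apply: (C1 yw).
  rewrite negb_exists => /forallP Hy; exfalso.
  have Hint : forall w, adj y w -> c y w = b.
    move=> w yw; move: (Hy w); rewrite yw /= => cw.
    have nyw : y != w by apply: contraTneq yw => <-; rewrite (negbTE (Hirr y)).
    by case: (cb nyw) => // e; rewrite e eqxx in cw.
  have := F2 x1 y; rewrite (T_cross (fun z xz => C1 xz1 c1 xz)) (T_int Hint).
  move/eqP; rewrite eq_sym muln_eq0 => /orP [] /eqP e; [move: kpos | move: bpos]; by rewrite e.
rewrite negb_exists => /forallP Hx; right => x z xz.
move: (Hx x); rewrite negb_exists => /forallP /(_ z); rewrite xz /= => cw.
have nxz : x != z by apply: contraTneq xz => <-; rewrite (negbTE (Hirr x)).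
by case: (cb nxz) => // e; rewrite e eqxx in cw.
Qed.

Section Cross.
Hypothesis Hcr : forall x z, adj x z -> c x z = 0%N.

Definition cl y := [set w | (w == y) || childB adj b a y w].

Lemma adj_neq x y : adj x y -> x != y.
Proof. by move=> xy; apply: contraTneq xy => <-; rewrite (negbTE (Hirr x)). Qed.

Lemma nbr_cl x y : adj x y -> [set w | adj x w] = cl y.
Proof.
move=> xy; apply/setP => w; rewrite !inE; apply/idP/idP.
  move=> xw; case: (eqVneq w y) => [//|nwy] /=.
  rewrite childBE eq_sym nwy /=.
  have : (0 < c y w)%N.
    rewrite /common_nbrs card_gt0; apply/set0Pn; exists x.
    by rewrite inE -!(Hsym x) xy xw.
  have nyw : y != w by rewrite eq_sym.
  by case: (cb nyw) => ->; rewrite ?eqxx.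
move=> /orP [/eqP -> // | yw].
apply/negPn/negP => nxw.
have cxy := Hcr xy.
have nxy := adj_neq xy.
have nxw' : x != w.
  apply: contraTneq yw => <-; rewrite childBE (@common_sym _ adj y x) cxy.
  by rewrite b0F andbF.
case: (cb nxw') => cxw.
  have : childB adj b a x y.
    apply: (Btrans (z := w)) => //; first by rewrite childBE nxw' cxw eqxx.
    by rewrite childB_sym.
  by rewrite childBE cxy b0F andbF.
have := F1 nxw' nxw cxw xy.
by move: yw; rewrite childBE => /andP [_ /eqP ->] b0; move: bpos; rewrite b0.
Qed.

Lemma cl_card kB lB mB : srg (childB adj b a) kB lB mB -> forall y, #|cl y| = kB.+1.
Proof.
case=> _ HBreg _ _ _ y.
have -> : cl y = y |: [set w | childB adj b a y w].
  by apply/setP => w; rewrite !inE.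
by rewrite cardsU1 inE childBE eqxx /= HBreg.
Qed.

Lemma has_nbr x : exists y, adj x y.
Proof.
have : (0 < #|[set y | adj x y]|)%N by rewrite Hreg kpos.
by rewrite card_gt0 => /set0Pn [y]; rewrite inE; exists y.
Qed.

Lemma opt3 : (2 <= k)%N /\ forall x, complete_bipartite_on adj (component adj x) k.
Proof.
case: Hsd => _ _ [kB [lB [mB HB]]].
have HBreg : regular (childB adj b a) kB by case: HB.
have HBne : ~ edgeless (childB adj b a) by case: HB.
have clc y : #|cl y| = kB.+1.
  have -> : cl y = y |: [set w | childB adj b a y w].
    by apply/setP => w; rewrite !inE.
  by rewrite cardsU1 inE childBE eqxx /= HBreg.
have kE : k = kB.+1.
  have [x0 [y0 xy0]] : exists x y, adj x y by case: (has_nbr ord0) => y; exists ord0, y.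
  by rewrite -(Hreg x0) (nbr_cl xy0) clc.
split.
  rewrite kE ltnS lt0n; have [u [w uw]] := exists_pair HBne.
  rewrite -(HBreg u) cards_eq0; apply/set0Pn; exists w; by rewrite inE.
move=> x; have [y xy] := has_nbr x.
pose X := cl x; pose Y := [set w | adj x w].
have NY : [set w | adj y w] = X by apply: nbr_cl; rewrite Hsym.
have HX u : u \in X -> [set w | adj u w] = Y.
  rewrite -NY inE => yu; rewrite /Y (nbr_cl xy); apply: nbr_cl; by rewrite Hsym.
have HY u : u \in Y -> [set w | adj u w] = X.
  by rewrite inE => xu; apply: nbr_cl; rewrite Hsym.
have disj : X :&: Y = set0.
  apply/setP => u; rewrite !inE; apply/negbTE; apply/negP => /andP [/orP [/eqP -> | xu] xu'].
    by rewrite (negbTE (Hirr x)) in xu'.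
  by move: xu; rewrite childBE (Hcr xu') b0F andbF.
have CE : component adj x = X :|: Y.
  apply/setP => u; rewrite inE; apply/idP/idP => H.
    apply: (conn_closed (S := fun u => u \in X :|: Y)) H; last first.
      by rewrite !inE eqxx.
    move=> u' w uw; rewrite inE => /orP [] Hu.
      by rewrite inE -(HX _ Hu) inE uw orbT.
    by rewrite inE -(HY _ Hu) inE uw.
  move: H; rewrite inE => /orP [] Hu.
    apply: connect_trans (connect1 xy) (connect1 _).
    by move: Hu; rewrite -NY inE.
  by apply: connect1; move: Hu; rewrite inE.
exists X, Y; split => //.
- by rewrite -NY Hreg.
- by rewrite Hreg.
move=> u w; rewrite CE in_setU => Hu _.
case: (boolP (u \in X)) => uX /=.
  have uY : u \notin Y by apply/negP => uY; move: disj => /setP /(_ u); rewrite in_setI uX uY in_set0.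
  by rewrite (negbTE uY) orbF -(HX _ uX) inE.
have uY : u \in Y by move: Hu; rewrite (negbTE uX).
by rewrite uY -(HY _ uY) inE.
Qed.
End Cross.
Section Internal.
Hypothesis Hint : forall x z, adj x z -> c x z = b.
Hypotheses (Hr : eigenvalue A r) (Ht : eigenvalue A t).
Hypotheses (rk : r != k%:R) (tk : t != k%:R) (rt : r != t).

Lemma int_B u w : adj u w -> childB adj b a u w.
Proof. by move=> uw; rewrite childBE adj_neq // Hint ?eqxx. Qed.

Lemma compE x : component adj x = cl x.
Proof.
apply/setP => y; rewrite inE; apply/idP/idP => H.
  apply: (conn_closed (S := fun y => y \in cl x)) H; last by rewrite !inE eqxx.
  move=> u w uw; rewrite !inE => /orP [/eqP ux | xu]; first by subst u; rewrite int_B ?orbT.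
  case: (eqVneq w x) => [//|nwx] /=.
  by apply: (Btrans (z := u)) => //; [rewrite eq_sym | exact: int_B].
move: H; rewrite !inE => /orP [/eqP -> | xy]; first exact: connect0.
by apply: cpos_conn; move: xy; rewrite childBE => /andP [_ /eqP ->]; exact: bpos.
Qed.

Lemma pair_b x y w : y \in component adj x -> w \in component adj x -> y != w ->
  c y w = b.
Proof.
rewrite !compE !inE => /orP [/eqP -> | xy] /orP [/eqP -> | xw] nyw.
- by rewrite eqxx in nyw.
- by move: xw; rewrite childBE => /andP [_ /eqP].
- by move: xy; rewrite childBE (@common_sym _ adj x y) => /andP [_ /eqP].
have : childB adj b a y w.
  by apply: (Btrans (z := x)) => //; rewrite childB_sym.
by rewrite childBE => /andP [_ /eqP].
Qed.

Lemma comp_notcomplete x : ~ (forall y w, y \in component adj x -> w \in component adj x ->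
   y != w -> adj y w).
Proof.
move=> Hcomp.
case: Hsd => _ _ [kB [lB [mB HB]]].
have nbrC u : u |: [set w | adj u w] \subset component adj u.
  apply/subsetP => w; rewrite !inE => /orP [/eqP -> | uw]; first exact: connect0.
  exact: connect1.
have cU u : #|u |: [set w | adj u w]| = k.+1.
  by rewrite cardsU1 inE (negbTE (Hirr u)) Hreg.
have kB_k : kB = k.
  have : component adj x = x |: [set w | adj x w].
    apply/eqP; rewrite eqEsubset nbrC andbT; apply/subsetP => w Hw.
    rewrite !inE; case: (eqVneq w x) => [//|nwx] /=.
    by apply: Hcomp => //; [rewrite inE connect0 | rewrite eq_sym].
  move=> CE; have := congr1 (fun S : {set 'I_n} => #|S|) CE.
  by rewrite /= compE (cl_card HB) cU => [[]].
have compU u : component adj u = u |: [set w | adj u w].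
  apply/esym/eqP; rewrite eqEcard nbrC compE (cl_card HB) cU kB_k leqnn //.
have BA u w : childB adj b a u w = adj u w.
  apply/idP/idP; last exact: int_B.
  move=> uw; have : w \in component adj u by rewrite compE inE uw orbT.
  rewrite compU !inE => /orP [/eqP wu | //].
  by move: uw; rewrite childBE wu eqxx.
have Bm_A : Bm = A by apply/matrixP => u w; rewrite !mxE BA.
have AA : A *m A = k%:R%:M + b%:R *: A.
  by rewrite A_sq Bm_A a0 scale0r addr0.
pose q := 'X * ('X - b%:R%:P) - (k%:R)%:P : {poly algC}.
have hq : horner_mx A q = 0.
  rewrite /q rmorphB rmorphM /= hornerXC horner_mx_X horner_mx_C -mulmxE.
  by rewrite mulmxBr mul_mx_scalar AA addrK subrr.
have root_of th : eigenvalue A th -> th * (th - b%:R) - k%:R = 0.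
  by move=> Hth; have := eig_root hq Hth; rewrite /root /q !hornerE => /eqP.
have Rk := root_of _ k_eig.
have Rr := root_of _ Hr.
have Rt := root_of _ Ht.
have E1 : (k%:R - r) * (k%:R + r - b%:R) = 0.
  have -> : (k%:R - r) * (k%:R + r - b%:R) =
    (k%:R * (k%:R - b%:R) - k%:R) - (r * (r - b%:R) - k%:R) :> algC by ring.
  by rewrite Rk Rr subrr.
have E2 : (k%:R - t) * (k%:R + t - b%:R) = 0.
  have -> : (k%:R - t) * (k%:R + t - b%:R) =
    (k%:R * (k%:R - b%:R) - k%:R) - (t * (t - b%:R) - k%:R) :> algC by ring.
  by rewrite Rk Rt subrr.
move/eqP: E1; rewrite mulf_eq0 subr_eq0 eq_sym (negbTE rk) /= => /eqP E1.
move/eqP: E2; rewrite mulf_eq0 subr_eq0 eq_sym (negbTE tk) /= => /eqP E2.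
move/eqP: rt; apply.
have -> : r = (k%:R + r - b%:R) + b%:R - k%:R by ring.
by rewrite E1 -E2; ring.
Qed.

Lemma opt2 : ~ connected_graph adj /\
  (exists v, forall x, srg_on adj (component adj x) v k b b).
Proof.
split => //.
case: Hsd => _ _ [kB [lB [mB HB]]].
exists kB.+1 => x.
have inC y z : y \in component adj x -> adj y z -> z \in component adj x.
  exact: comp_closed.
have cnt y w : y \in component adj x ->
    #|[set z in component adj x | adj y z && adj w z]| = c y w.
  move=> Hy; rewrite /common_nbrs; apply: eq_card => z; rewrite !inE.
  by apply/andb_idl => /andP [yz _]; rewrite -inE; apply: inC yz.
split.
- by rewrite compE (cl_card HB).
- move=> y Hy; rewrite -(Hreg y); apply: eq_card => z; rewrite !inE.
  by apply/andb_idl => yz; rewrite -inE; apply: inC yz.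
- exact: comp_notcomplete.
- move=> H; have [z xz] := has_nbr x.
  have Hx : x \in component adj x by rewrite inE connect0.
  by move: (H x z Hx (inC _ _ Hx xz)); rewrite xz.
split.
- by move=> y w Hy Hw nyw _; rewrite cnt // (pair_b Hy Hw nyw).
- by move=> y w Hy Hw nyw _; rewrite cnt // (pair_b Hy Hw nyw).
Qed.

End Internal.
End Disc.

Lemma part_iii : num_eigenvalues A 3 ->
        [\/ exists lam mu, srg adj k lam mu /\
              ((lam = a /\ mu = b) \/ (lam = b /\ mu = a)),
            ~ connected_graph adj /\
              (exists v, forall x, srg_on adj (component adj x) v k b b)
          | (2 <= k)%N /\ forall x, complete_bipartite_on adj (component adj x) k].
Proof.
case=> s [us ss Hs].
have ks : k%:R \in s by apply/Hs/k_eig.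
have Hann0 := ann_of us Hs.
have P := perm_to_rem ks.
have : size (rem k%:R s) = 2%N by rewrite size_rem ?ss.
move: Hann0 P; case: (rem k%:R s) => [|r [|t []]] // Hann0 P _.
rewrite big_cons big_seq1 !rmorphM /= !hornerXC -!mulmxE in Hann0.
have u3 : uniq [:: k%:R; r; t] by rewrite -(perm_uniq P).
move: (u3); rewrite /= !inE negb_or => /andP [/andP [kr kt] /andP [rt _]].
have Hr : eigenvalue A r by apply/Hs; rewrite (perm_mem P) !inE eqxx orbT.
have Ht : eigenvalue A t by apply/Hs; rewrite (perm_mem P) !inE eqxx !orbT.
case: (boolP [forall x, [forall y, connect adj x y]]) => Hc.
  apply: Or31; apply: (conn_case (r := r) (t := t)) => // x y.
  by move/forallP: Hc => /(_ x) /forallP /(_ y).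
have Hnc' : ~ connected_graph adj.
  move=> H; move/negP: Hc; apply; apply/forallP => x; apply/forallP => y; exact: H.
case: (all_dich Hnc' Hann0) => H.
  by apply: Or33; apply: (opt3 Hnc' Hann0 H).
apply: Or32; apply: (opt2 Hnc' H Hr Ht) => //; by rewrite eq_sym.
Qed.
End Main.
Local Close Scope ring_scope.

Theorem proposition1 (n : nat) (adj : rel 'I_n) (k b a : nat) :
  strongly_deza adj k b a ->
  [/\ (* (i) *)
      exists m, m <= 5 /\ num_eigenvalues (adjmx adj) m,
      (* (ii) *)
      num_eigenvalues (adjmx adj) 2 ->
        [/\ a = 0, b = k - 1, 1 <= b & union_of_cliques adj k.+1] &
      (* (iii) *)
      num_eigenvalues (adjmx adj) 3 ->
        [\/ exists lam mu, srg adj k lam mu /\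
              ((lam = a /\ mu = b) \/ (lam = b /\ mu = a)),
            ~ connected_graph adj /\
              (exists v, forall x, srg_on adj (component adj x) v k b b)
          | 2 <= k /\ forall x, complete_bipartite_on adj (component adj x) k]].
Proof.
case: n adj => [|n'] adj Hsd.
  exfalso; case: Hsd => [[_ _ Hnc _ _]] _ _; apply: Hnc => x; by case: x.
split; [exact: part_i Hsd | exact: part_ii Hsd | exact: part_iii Hsd].
Qed.
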